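(* Let $G$ be a non-chordal bridged graph of diameter two, and let $C$ be an induced cycle of length $k\ge 6$ in $G$ of minimum length among all induced cycles of length greater than three. Then there exists a vertex $x\notin C$ adjacent to every vertex of $C$, so that $C\cup\{x\}$ induces a $k$-wheel.
   Context: $G$ is bridged if it contains no isometric cycle (a cycle whose distances equal distances in $G$) of length greater than three; in particular a bridged graph has no induced cycles of length 4 or 5. A graph is chordal if it has no induced cycle of length greater than three. A $k$-wheel is a $k$-cycle together with one extra vertex adjacent to all vertices of the cycle. *)

(* Defs.v *)
From Stdlib Require Import Arith Lia.

Definition simple_graph {T : Type} (adj : T -> T -> Prop) : Prop :=
  (forall x y, adj x y -> adj y x) /\ (forall x, ~ adj x x).

Definition walk {T : Type} (adj : T -> T -> Prop) (x y : T) (n : nat) : Prop :=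
  exists p : nat -> T, p 0 = x /\ p n = y /\ forall i, i < n -> adj (p i) (p (S i)).

Definition dist_le {T : Type} (adj : T -> T -> Prop) (x y : T) (n : nat) : Prop :=
  exists m, m <= n /\ walk adj x y m.

Definition diameter_two {T : Type} (adj : T -> T -> Prop) : Prop :=
  (forall x y, dist_le adj x y 2) /\ (exists x y, ~ dist_le adj x y 1).

Definition cyc_dist (k i j : nat) : nat :=
  let d := (j - i) + (i - j) in Nat.min d (k - d).

Definition is_cycle {T : Type} (adj : T -> T -> Prop) (k : nat) (c : nat -> T) : Prop :=
  3 <= k /\
  (forall i j, i < k -> j < k -> c i = c j -> i = j) /\
  (forall i, i < k -> adj (c i) (c ((S i) mod k))).

Definition induced_cycle {T : Type} (adj : T -> T -> Prop) (k : nat) (c : nat -> T) : Prop :=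
  is_cycle adj k c /\
  (forall i j, i < k -> j < k -> adj (c i) (c j) -> cyc_dist k i j = 1).

Definition isometric_cycle {T : Type} (adj : T -> T -> Prop) (k : nat) (c : nat -> T) : Prop :=
  is_cycle adj k c /\
  (forall i j n, i < k -> j < k -> (dist_le adj (c i) (c j) n <-> cyc_dist k i j <= n)).

Definition bridged {T : Type} (adj : T -> T -> Prop) : Prop :=
  forall k c, 3 < k -> ~ isometric_cycle adj k c.

Definition chordal {T : Type} (adj : T -> T -> Prop) : Prop :=
  forall k c, 3 < k -> ~ induced_cycle adj k c.

(* Main.v *)
Require Import Defs.
From Stdlib Require Import Arith Lia Classical.

Lemma min_ex (P : nat -> Prop) n : P n -> exists m, P m /\ forall m', m' < m -> ~ P m'.
Proof.
  induction n as [n IH] using (well_founded_induction lt_wf). intros Hn.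
  destruct (classic (exists m', m' < n /\ P m')) as [[m' [Hlt Hp]]|Hno].
  - exact (IH m' Hlt Hp).
  - exists n; split; auto. intros m' Hm' Hp. apply Hno; eauto.
Qed.

Section S.
Variable T : Type.
Variable adj : T -> T -> Prop.
Hypothesis Hg : simple_graph adj.

Lemma cyc_adj k c : is_cycle adj k c -> forall p, p + 1 < k -> adj (c p) (c (p + 1)).
Proof.
  intros [Hk [_ Ha]] p Hp. specialize (Ha p ltac:(lia)).
  rewrite Nat.mod_small in Ha by lia. replace (p+1) with (S p) by lia. exact Ha.
Qed.

Lemma cyc_last k c : is_cycle adj k c -> adj (c (k - 1)) (c 0).
Proof.
  intros [Hk [_ Ha]]. specialize (Ha (k-1) ltac:(lia)).
  replace (S (k-1)) with k in Ha by lia. rewrite Nat.mod_same in Ha by lia. exact Ha.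
Qed.

Lemma chord k c : induced_cycle adj k c -> forall p q, p < k -> q < k -> adj (c p) (c q) ->
  (p - q) + (q - p) = 1 \/ (p - q) + (q - p) = k - 1.
Proof.
  intros [_ Hch] p q Hp Hq Ha. specialize (Hch p q Hp Hq Ha).
  unfold cyc_dist in Hch. cbv zeta in Hch. lia.
Qed.

Lemma gen_cycle k c x L (g : nat -> nat) :
  induced_cycle adj k c ->
  (forall p, p < k -> x <> c p) ->
  4 <= L ->
  (forall i, 1 <= i -> i < L -> g i < k) ->
  (forall i j, 1 <= i -> i < L -> 1 <= j -> j < L -> g i = g j -> i = j) ->
  (forall i, 1 <= i -> i + 1 < L -> adj (c (g i)) (c (g (i+1)))) ->
  adj x (c (g 1)) -> adj x (c (g (L-1))) ->
  (forall i, 1 < i -> i < L - 1 -> ~ adj x (c (g i))) ->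
  (forall i j, 1 <= i -> i < L -> 1 <= j -> j < L -> adj (c (g i)) (c (g j)) ->
      i = j + 1 \/ j = i + 1) ->
  induced_cycle adj L (fun i => if i =? 0 then x else c (g i)).
Proof.
  intros Hc Hx HL H2 H3 H4 H5a H5b H6 H7.
  destruct Hg as [Hsym Hirr].
  destruct Hc as [[Hk [Hinj Hca]] Hch].
  split; [split; [lia|split]|].
  - intros i j Hi Hj. cbv beta.
    destruct (Nat.eqb_spec i 0); destruct (Nat.eqb_spec j 0); intro Heq.
    + lia.
    + exfalso. apply (Hx (g j)); [apply H2; lia|exact Heq].
    + exfalso. apply (Hx (g i)); [apply H2; lia|symmetry; exact Heq].
    + apply H3; try lia. apply Hinj; try (apply H2; lia). exact Heq.
  - intros i Hi. cbv beta.
    destruct (Nat.lt_ge_cases (i+1) L).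
    + rewrite Nat.mod_small by lia.
      destruct (Nat.eqb_spec i 0); destruct (Nat.eqb_spec (S i) 0); try lia.
      * subst. exact H5a.
      * replace (S i) with (i+1) by lia. apply H4; lia.
    + replace (S i) with L by lia. rewrite Nat.mod_same by lia.
      destruct (Nat.eqb_spec i 0); try lia. simpl.
      replace i with (L-1) by lia. apply Hsym. exact H5b.
  - intros i j Hi Hj. cbv beta.
    destruct (Nat.eqb_spec i 0); destruct (Nat.eqb_spec j 0); intro Ha.
    + subst. exfalso. exact (Hirr x Ha).
    + assert (j = 1 \/ j = L - 1).
      { destruct (classic (j = 1 \/ j = L - 1)) as [?|Hn]; auto.
        exfalso. apply (H6 j); try lia. exact Ha. }
      unfold cyc_dist; cbv zeta; lia.
    + assert (i = 1 \/ i = L - 1).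
      { destruct (classic (i = 1 \/ i = L - 1)) as [?|Hn]; auto.
        exfalso. apply (H6 i); try lia. apply Hsym. exact Ha. }
      unfold cyc_dist; cbv zeta; lia.
    + specialize (H7 i j ltac:(lia) Hi ltac:(lia) Hj Ha).
      unfold cyc_dist; cbv zeta; lia.
Qed.

Variable k : nat.
Variable c : nat -> T.
Hypothesis Hc : induced_cycle adj k c.
Hypothesis Hmin : forall k' c', 3 < k' -> induced_cycle adj k' c' -> k <= k'.
Variable x : T.
Hypothesis Hx : forall p, p < k -> x <> c p.

Lemma arc a b : a < b -> b < k -> b - a + 3 <= k -> adj x (c a) -> adj x (c b) ->
  forall j, a <= j <= b -> adj x (c j).
Proof.
  intros Hab Hbk Hlen Ha Hb j Hj.
  destruct (classic (adj x (c j))) as [|Hn]; auto. exfalso.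
  assert (j <> a) by (intro; subst; contradiction).
  assert (j <> b) by (intro; subst; contradiction).
  destruct (min_ex (fun u => u <= j - a /\ adj x (c (j - u))) (j - a)) as [u1 [[Hu1a Hu1b] Hu1m]].
  { split; [lia|]. replace (j - (j - a)) with a by lia. exact Ha. }
  destruct (min_ex (fun u => j + u <= b /\ adj x (c (j + u))) (b - j)) as [u2 [[Hu2a Hu2b] Hu2m]].
  { split; [lia|]. replace (j + (b - j)) with b by lia. exact Hb. }
  assert (u1 <> 0) by (intro; subst; rewrite Nat.sub_0_r in Hu1b; contradiction).
  assert (u2 <> 0) by (intro; subst; rewrite Nat.add_0_r in Hu2b; contradiction).
  pose (t1 := j - u1). assert (Ht1 : t1 = j - u1) by reflexivity. clearbody t1.
  pose (t2 := j + u2). assert (Ht2 : t2 = j + u2) by reflexivity. clearbody t2.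
  assert (Hnon : forall t, t1 < t < t2 -> ~ adj x (c t)).
  { intros t Ht Hadj. destruct (Nat.le_gt_cases t j).
    - apply (Hu1m (j - t)); [lia|]. split; [lia|]. replace (j - (j - t)) with t by lia. exact Hadj.
    - apply (Hu2m (t - j)); [lia|]. split; [lia|]. replace (j + (t - j)) with t by lia. exact Hadj. }
  assert (Hcyc := Hc). destruct Hcyc as [Hic _].
  assert (k <= t2 - t1 + 2).
  { apply (Hmin _ (fun i => if i =? 0 then x else c ((fun i => t1 + i - 1) i))); [lia|].
    apply (gen_cycle k c); auto; cbv beta.
    - lia.
    - intros; lia.
    - intros; lia.
    - intros i Hi HiL. replace (t1 + (i+1) - 1) with (t1 + i - 1 + 1) by lia.
      apply (cyc_adj k c Hic); lia.
    - replace (t1 + 1 - 1) with (j - u1) by lia. exact Hu1b.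
    - replace (t1 + (t2 - t1 + 2 - 1) - 1) with (j + u2) by lia. exact Hu2b.
    - intros i Hi HiL. apply Hnon. lia.
    - intros i i' Hi HiL Hi' HiL' Had.
      apply (chord k c Hc) in Had; lia. }
  lia.
Qed.

Lemma wrap a : 3 <= a -> a < k -> adj x (c 0) -> adj x (c a) ->
  forall j, a <= j < k -> adj x (c j).
Proof.
  intros H3a Hak H0 Ha j Hj.
  destruct (classic (adj x (c j))) as [|Hn]; auto. exfalso.
  assert (j <> a) by (intro; subst; contradiction).
  destruct (classic (exists b, j < b < k /\ adj x (c b))) as [[b [Hb Hbadj]]|Hno].
  { apply Hn. apply (arc a b); auto; lia. }
  destruct (min_ex (fun u => u <= j - a /\ adj x (c (j - u))) (j - a)) as [u1 [[Hu1a Hu1b] Hu1m]].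
  { split; [lia|]. replace (j - (j - a)) with a by lia. exact Ha. }
  assert (u1 <> 0) by (intro; subst; rewrite Nat.sub_0_r in Hu1b; contradiction).
  pose (t1 := j - u1). assert (Ht1 : t1 = j - u1) by reflexivity. clearbody t1.
  assert (Hnon : forall t, t1 < t < k -> ~ adj x (c t)).
  { intros t Ht Hadj. destruct (Nat.le_gt_cases t j).
    - apply (Hu1m (j - t)); [lia|]. split; [lia|]. replace (j - (j - t)) with t by lia. exact Hadj.
    - apply Hno. exists t. split; [lia|exact Hadj]. }
  assert (Hcyc := Hc). destruct Hcyc as [Hic _].
  assert (k <= k - t1 + 2).
  { apply (Hmin _ (fun i => if i =? 0 then x else
        c ((fun i => if t1 + i - 1 <? k then t1 + i - 1 else 0) i))); [lia|].
    apply (gen_cycle k c); auto; cbv beta.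
    - lia.
    - intros i Hi HiL. destruct (Nat.ltb_spec (t1 + i - 1) k); lia.
    - intros i i' Hi HiL Hi' HiL'.
      destruct (Nat.ltb_spec (t1 + i - 1) k); destruct (Nat.ltb_spec (t1 + i' - 1) k); lia.
    - intros i Hi HiL.
      destruct (Nat.ltb_spec (t1 + i - 1) k); destruct (Nat.ltb_spec (t1 + (i+1) - 1) k); try lia.
      + replace (t1 + (i+1) - 1) with (t1 + i - 1 + 1) by lia.
        apply (cyc_adj k c Hic); lia.
      + replace (t1 + i - 1) with (k - 1) by lia. apply (cyc_last k c Hic).
    - destruct (Nat.ltb_spec (t1 + 1 - 1) k); try lia.
      replace (t1 + 1 - 1) with (j - u1) by lia. exact Hu1b.
    - destruct (Nat.ltb_spec (t1 + (k - t1 + 2 - 1) - 1) k); try lia. exact H0.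
    - intros i Hi HiL. destruct (Nat.ltb_spec (t1 + i - 1) k); try lia.
      apply Hnon. lia.
    - intros i i' Hi HiL Hi' HiL'.
      destruct (Nat.ltb_spec (t1 + i - 1) k); destruct (Nat.ltb_spec (t1 + i' - 1) k);
        intro Had; apply (chord k c Hc) in Had; lia. }
  lia.
Qed.

End S.

Theorem mainTheorem13 (T : Type) (adj : T -> T -> Prop)
  (Hg : simple_graph adj) (Hbr : bridged adj) (Hnc : ~ chordal adj)
  (Hdiam : diameter_two adj)
  (k : nat) (c : nat -> T) (Hc : induced_cycle adj k c) (Hk : 6 <= k)
  (Hmin : forall k' c', 3 < k' -> induced_cycle adj k' c' -> k <= k') :
  exists x : T, (forall i, i < k -> x <> c i) /\ (forall i, i < k -> adj x (c i)).
Proof.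
  destruct Hdiam as [Hd _].
  assert (Hcc := Hc). destruct Hcc as [[_ [Hinj _]] _].
  destruct (Hd (c 0) (c 3)) as [m [Hm [p [Hp0 [Hpm Hpa]]]]].
  destruct m as [|[|[|m]]]; try lia.
  - exfalso. rewrite Hp0 in Hpm. apply Hinj in Hpm; lia.
  - exfalso. specialize (Hpa 0 ltac:(lia)). rewrite Hp0, Hpm in Hpa.
    apply (chord T adj k c Hc) in Hpa; lia.
  - pose proof (Hpa 0 ltac:(lia)) as A0. pose proof (Hpa 1 ltac:(lia)) as A1.
    rewrite Hp0 in A0. rewrite Hpm in A1.
    pose proof Hg as [Hsym Hirr].
    set (x := p 1) in *.
    assert (Hx : forall i, i < k -> x <> c i).
    { intros i Hi Heq. rewrite Heq in A0, A1.
      apply (chord T adj k c Hc) in A0; try lia.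
      apply (chord T adj k c Hc) in A1; lia. }
    assert (B0 : adj x (c 0)) by (apply Hsym; exact A0).
    exists x. split; auto.
    intros i Hi.
    destruct (Nat.le_gt_cases i 3).
    + apply (arc T adj Hg k c Hc Hmin x Hx 0 3); auto; lia.
    + apply (wrap T adj Hg k c Hc Hmin x Hx 3); auto; lia.
Qed.
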